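(* Let $\{\sigma_j\colon\mathcal{A}^+\to\mathcal{B}_j^+\}_{j\in J}$ be a family of morphisms such that for every $a\in\mathcal{A}$ the length $\ell_a:=|\sigma_j(a)|$ does not depend on $j\in J$, and let $u,v\in\mathcal{A}^+$ with $|u|\ge\ell:=\sum_{a\in\mathcal{A}}\ell_a$. Assume that $u$ and $v$ start with different letters and that $\sigma_j(u)$ is a prefix of $\sigma_j(v)$ for every $j\in J$. Then there exist a letter-onto morphism $q\colon\mathcal{A}^+\to\mathcal{C}^+$ with $\#\mathcal{C}<\#\mathcal{A}$ and morphisms $\{p_j\colon\mathcal{C}^+\to\mathcal{B}_j^+\}_{j\in J}$ such that for every $c\in\mathcal{C}$ the length $|p_j(c)|$ does not depend on $j\in J$, and $\sigma_j=p_jq$ for every $j\in J$.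
   Context: Alphabets are finite sets; $\mathcal{A}^+$ is the free semigroup of nonempty finite words over $\mathcal{A}$; a morphism is a semigroup homomorphism (determined by images of letters). A word $w$ is a prefix of $w'$ if $w'=ws$ for some possibly empty word $s$. A morphism $q\colon\mathcal{A}^+\to\mathcal{C}^+$ is letter-onto if every letter of $\mathcal{C}$ occurs in some $q(a)$. *)

(* Defs.v *)
From mathcomp Require Import all_boot.
Set Implicit Arguments. Unset Strict Implicit. Unset Printing Implicit Defensive.

(* A morphism A^+ -> B^+ is represented by its images of letters f : A -> seq B,
   all of which must be nonempty words. *)
Definition is_morphism (A B : Type) (f : A -> seq B) : Prop :=
  forall a, f a <> [::].

Definition morph_app (A B : Type) (f : A -> seq B) (w : seq A) : seq B :=
  flatten (map f w).

Definition letter_onto (A : Type) (C : eqType) (q : A -> seq C) : Prop :=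
  forall c : C, exists a : A, c \in q a.

(* Main.v *)
Require Import Defs.
From mathcomp Require Import all_boot.
From mathcomp Require Import zify.
From Stdlib Require Import Classical_Prop.

Set Implicit Arguments. Unset Strict Implicit.

Definition concl (A : finType) (J : Type) (B : J -> finType)
    (sigma : forall j : J, A -> seq (B j)) : Prop :=
  exists (C : finType) (q : A -> seq C),
    [/\ is_morphism q, letter_onto q, #|C| < #|A| &
      exists p : forall j : J, C -> seq (B j),
        [/\ forall j, is_morphism (p j),
            forall (j j' : J) (c : C), size (p j c) = size (p j' c) &
            forall (j : J) (w : seq A),
              morph_app (sigma j) w = morph_app (p j) (morph_app q w)]].


Lemma morph_app_cons (A B : Type) (f : A -> seq B) x s :
  morph_app f (x :: s) = f x ++ morph_app f s.
Proof. by []. Qed.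

Lemma morph_app_cat (A B : Type) (f : A -> seq B) s t :
  morph_app f (s ++ t) = morph_app f s ++ morph_app f t.
Proof. by rewrite /morph_app map_cat flatten_cat. Qed.

Lemma morph_app_comp (A B C : Type) (p : B -> seq C) (q : A -> seq B) w :
  morph_app p (morph_app q w) = morph_app (fun x => morph_app p (q x)) w.
Proof.
elim: w => [//|x w IH]; by rewrite !morph_app_cons morph_app_cat IH.
Qed.

Lemma morph_app_ne0 (A B : Type) (f : A -> seq B) w :
  is_morphism f -> w <> [::] -> morph_app f w <> [::].
Proof.
move=> hf; case: w => [//|x w] _; rewrite morph_app_cons.
by case E: (f x) => [|y t] //; have := hf x; rewrite E.
Qed.

Lemma size_morph_app_ge (A B : Type) (f : A -> seq B) w :
  is_morphism f -> size w <= size (morph_app f w).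
Proof.
move=> hf; elim: w => [//|x w IH]; rewrite morph_app_cons size_cat /=.
have: 0 < size (f x) by case E: (f x) => //; have := hf x; rewrite E.
move=> h; rewrite -add1n leq_add //.
Qed.

Lemma mem_morph_app (A : eqType) (B : eqType) (f : A -> seq B) w x c :
  x \in w -> c \in f x -> c \in morph_app f w.
Proof.
elim: w => [//|y w IH]; rewrite in_cons morph_app_cons mem_cat.
case/orP => [/eqP-> ->//|/IH h /h ->]; by rewrite orbT.
Qed.

Lemma lift (A : finType) (J : Type) (B : J -> finType)
    (sigma sigma' : forall j : J, A -> seq (B j)) (q0 : A -> seq A) :
  (forall x, q0 x <> [::]) -> (forall x, x \in q0 x) ->
  (forall j x, sigma j x = morph_app (sigma' j) (q0 x)) ->
  concl sigma' -> concl sigma.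
Proof.
move=> hq0 hmem hs [C [q' [hq' hon hcard [p [hp hsz heq]]]]].
exists C, (fun x => morph_app q' (q0 x)); split => //.
- by move=> x; apply: morph_app_ne0.
- move=> c; have [x hx] := hon c; exists x; exact: mem_morph_app (hmem x) hx.
exists p; split => // j w.
have -> : morph_app (sigma j) w = morph_app (sigma' j) (morph_app q0 w).
  rewrite morph_app_comp /morph_app; congr flatten; apply: eq_map => x.
  exact: hs.
by rewrite heq; congr (morph_app _ _); rewrite morph_app_comp.
Qed.

Lemma morph_app_ext_comp (A B C : Type) (f : A -> seq C) (g : B -> seq C)
  (h : A -> seq B) w :
  (forall x, f x = morph_app g (h x)) -> morph_app f w = morph_app g (morph_app h w).
Proof.
move=> hf; rewrite morph_app_comp /morph_app; congr flatten; apply: eq_map => x.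
exact: hf.
Qed.

Definition q0 {A : eqType} (a b : A) (x : A) : seq A :=
  if x == b then [:: a; b] else [:: x].

Lemma q0_ne0 (A : eqType) (a b : A) x : q0 a b x <> [::].
Proof. by rewrite /q0; case: ifP. Qed.

Lemma q0_mem (A : eqType) (a b : A) x : x \in q0 a b x.
Proof. rewrite /q0; case: ifP => [/eqP->|_]; by rewrite !inE eqxx ?orbT. Qed.

Lemma ell_le_sum (A : finType) (ell : A -> nat) a : ell a <= \sum_(x : A) ell x.
Proof. by rewrite (bigD1 a) //= leq_addr. Qed.

Lemma split_step (A : finType) (J : Type) (B : J -> finType)
    (sigma : forall j : J, A -> seq (B j)) (ell : A -> nat) (a b : A) :
  a != b -> ell a < ell b -> (forall j, is_morphism (sigma j)) ->
  (forall j x, size (sigma j x) = ell x) ->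
  (forall j, sigma j a = take (ell a) (sigma j b)) ->
  exists (sigma' : forall j : J, A -> seq (B j)) (ell' : A -> nat),
    [/\ forall j, is_morphism (sigma' j),
        forall j x, size (sigma' j x) = ell' x,
        \sum_(x : A) ell' x + ell a = \sum_(x : A) ell x,
        forall j, sigma' j b = drop (ell a) (sigma j b) &
        forall j x, sigma j x = morph_app (sigma' j) (q0 a b x)].
Proof.
move=> hab hlt hsig hell htk.
exists (fun j x => if x == b then drop (ell a) (sigma j b) else sigma j x).
exists (fun x => if x == b then ell b - ell a else ell x).
split.
- move=> j x; case: ifP => _.
    move=> h; have := congr1 size h; rewrite size_drop hell /=.
    by move/eqP; rewrite subn_eq0 leqNgt hlt.
  exact: hsig.
- by move=> j x; case: ifP => _; rewrite ?size_drop hell.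
- rewrite (bigD1 b) //= [in RHS](bigD1 b) //= eqxx -addnA.
  rewrite (eq_bigr ell); last by move=> x /negbTE ->.
  by rewrite [_ + ell a]addnC addnA subnK // ltnW.
- by move=> j; rewrite eqxx.
- move=> j x; rewrite /q0 /morph_app; case: ifP => [/eqP->|hx] /=.
    by rewrite eqxx (negbTE hab) cats0 htk cat_take_drop.
  by rewrite hx cats0.
Qed.


Lemma merge_step (A : finType) (J : Type) (B : J -> finType)
    (sigma : forall j : J, A -> seq (B j)) (ell : A -> nat) (a b : A) :
  a != b -> (forall j, is_morphism (sigma j)) ->
  (forall j x, size (sigma j x) = ell x) ->
  (forall j, sigma j a = sigma j b) -> concl sigma.
Proof.
move=> hab hsig hell heq.
pose ca : {x : A | x != b} := exist _ a hab.
exists {x : A | x != b}; exists (fun x => [:: insubd ca x]); split.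
- by [].
- by move=> c; exists (val c); rewrite valKd mem_seq1.
- rewrite card_sig.
  have -> : #|[pred x | x != b]| = #|predC1 b| by apply: eq_card.
  by rewrite cardC1 prednK //; apply/card_gt0P; exists a.
exists (fun j c => sigma j (val c)); split.
- by move=> j c; apply: hsig.
- by move=> j j' c; rewrite !hell.
move=> j w; apply: morph_app_ext_comp => x.
rewrite /morph_app /= cats0 val_insubd; case: ifP => // /negbFE /eqP ->.
by rewrite heq.
Qed.


Lemma pos_ell (A : finType) (J : Type) (B : J -> finType)
    (sigma : forall j : J, A -> seq (B j)) (ell : A -> nat) (j0 : J) :
  (forall j, is_morphism (sigma j)) ->
  (forall j x, size (sigma j x) = ell x) -> forall x, 0 < ell x.
Proof.
move=> hsig hell x; rewrite -(hell j0); case E: (sigma j0 x) => //.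
by have := hsig j0 x; rewrite E.
Qed.

Lemma main (A : finType) (J : Type) (B : J -> finType) (j0 : J) n :
  forall (sigma : forall j : J, A -> seq (B j)) (ell : A -> nat),
  (forall j, is_morphism (sigma j)) ->
  (forall j x, size (sigma j x) = ell x) ->
  \sum_(x : A) ell x <= n ->
  forall u v : seq A, u <> [::] -> v <> [::] ->
  \sum_(x : A) ell x <= size u -> ohead u <> ohead v ->
  (forall j, prefix (morph_app (sigma j) u) (morph_app (sigma j) v)) ->
  concl sigma.
Proof.
elim: n => [|n IH] sigma ell hsig hell hn u v hu hv hlen hfirst hpref;
  have hpos := pos_ell j0 hsig hell.
  case: u hu {hlen hfirst hpref} => [//|a u] _.
  by have := leq_trans (ell_le_sum ell a) hn; rewrite leqNgt hpos.
case: u hu hlen hfirst hpref => [//|a u] _ hlen.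
case: v hv => [//|b v] _ hfirst hpref.
have hab : a != b by apply/eqP => e; apply: hfirst; rewrite e.
case: (ltngtP (ell a) (ell b)) => hcmp.
-
  have H : forall j, (sigma j a == take (ell a) (sigma j b)) &&
     prefix (morph_app (sigma j) u) (drop (ell a) (sigma j b) ++ morph_app (sigma j) v).
    move=> j; have := hpref j; rewrite !morph_app_cons.
    rewrite -{1}(cat_take_drop (ell a) (sigma j b)) -catA prefix_catr //.
    by rewrite size_take hell hell hcmp.
  have [sigma' [ell' [hsig' hell' hsum hb' hx']]] :=
    split_step hab hcmp hsig hell (fun j => elimT eqP (proj1 (andP (H j)))).
  apply: (lift (@q0_ne0 _ a b) (@q0_mem _ a b) hx').
  have hpos' := pos_ell j0 hsig' hell'.
  have hsu : \sum_(x : A) ell' x <= size u.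
    by have := hpos a; move: hlen; rewrite -hsum /=; lia.
  have hune : u <> [::].
    by move=> e; move: hsu; rewrite e leqNgt (leq_trans (hpos' b) (ell_le_sum _ _)).
  apply: (IH sigma' ell' hsig' hell' _ (morph_app (q0 a b) u)
            (b :: morph_app (q0 a b) v)).
  + by have := hpos a; move: hn; rewrite -hsum; lia.
  + exact: morph_app_ne0 (@q0_ne0 _ a b) hune.
  + by [].
  + exact: leq_trans hsu (size_morph_app_ge _ (@q0_ne0 _ a b)).
  + case: u {hlen hfirst hpref H hsu} hune => [//|x u] _.
    rewrite morph_app_cons /q0; case: ifP => [_|/negbT hx] /=.
      by case=> /eqP; rewrite (negbTE hab).
    by case=> /eqP; rewrite (negbTE hx).
  + move=> j; rewrite morph_app_cons hb' -!(morph_app_ext_comp _ (hx' j)).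
    by case/andP: (H j).
-
  have H : forall j, (take (ell b) (sigma j a) == sigma j b) &&
     prefix (drop (ell b) (sigma j a) ++ morph_app (sigma j) u) (morph_app (sigma j) v).
    move=> j; have := hpref j; rewrite !morph_app_cons.
    rewrite -{1}(cat_take_drop (ell b) (sigma j a)) -catA prefix_catr //.
    by rewrite size_take hell hell hcmp.
  have hba : b != a by rewrite eq_sym.
  have [sigma' [ell' [hsig' hell' hsum hb' hx']]] :=
    split_step hba hcmp hsig hell (fun j => esym (elimT eqP (proj1 (andP (H j))))).
  apply: (lift (@q0_ne0 _ b a) (@q0_mem _ b a) hx').
  have hpos' := pos_ell j0 hsig' hell'.
  have hvne : v <> [::].
    move=> e; have := proj2 (andP (H j0)); rewrite e => /size_prefix.
    rewrite size_cat size_drop hell /=; lia.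
  apply: (IH sigma' ell' hsig' hell' _ (a :: morph_app (q0 b a) u)
            (morph_app (q0 b a) v)).
  + by have := hpos b; move: hn; rewrite -hsum; lia.
  + by [].
  + exact: morph_app_ne0 (@q0_ne0 _ b a) hvne.
  + apply: leq_trans (leq_addr (ell b) _) _; rewrite hsum.
    apply: leq_trans hlen _; rewrite /= ltnS.
    exact: size_morph_app_ge (@q0_ne0 _ b a).
  + case: v {hfirst hpref H} hvne => [//|y v] _.
    rewrite morph_app_cons /q0; case: ifP => [_|/negbT hy] /=.
      by case=> /eqP; rewrite (negbTE hab).
    by case=> /eqP; rewrite eq_sym (negbTE hy).
  + move=> j; rewrite morph_app_cons hb' -!(morph_app_ext_comp _ (hx' j)).
    by case/andP: (H j).
-
  apply: (merge_step hab hsig hell) => j.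
  have := hpref j; rewrite !morph_app_cons prefix_catr ?hell //.
  by case/andP => /eqP.
Qed.

Unset Implicit Arguments. Set Strict Implicit.

Theorem lemma3p2 (A : finType) (J : Type) (B : J -> finType)
    (sigma : forall j : J, A -> seq (B j))
    (hsigma : forall j, is_morphism (sigma j))
    (ell : A -> nat)
    (hell : forall (j : J) (a : A), size (sigma j a) = ell a)
    (u v : seq A) (hu : u <> [::]) (hv : v <> [::])
    (hlen : \sum_(a : A) ell a <= size u)
    (hfirst : ohead u <> ohead v)
    (hpref : forall j : J, prefix (morph_app (sigma j) u) (morph_app (sigma j) v)) :
  exists (C : finType) (q : A -> seq C),
    [/\ is_morphism q, letter_onto q, #|C| < #|A| &
      exists p : forall j : J, C -> seq (B j),
        [/\ forall j, is_morphism (p j),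
            forall (j j' : J) (c : C), size (p j c) = size (p j' c) &
            forall (j : J) (w : seq A),
              morph_app (sigma j) w = morph_app (p j) (morph_app q w)]].
Proof.
case: (Classical_Prop.classic (inhabited J)) => [[j0]|hJ].
  exact: (@main A J B j0 _ sigma ell hsigma hell (leqnn _) u v hu hv hlen hfirst hpref).
case: u hu hlen hfirst hpref => [//|a u] _ _.
case: v hv => [//|b v] _ hfirst _.
have hab : a != b by apply/eqP => e; apply: hfirst; rewrite e.
exists 'I_1; exists (fun _ => [:: ord0]); split.
- by [].
- by move=> c; exists a; rewrite (ord1 c) mem_seq1.
- rewrite card_ord; apply/card_gt1P; by exists a, b.
exists (fun j => match hJ (inhabits j) with end); split.
- by move=> j; case: (hJ (inhabits j)).
- by move=> j; case: (hJ (inhabits j)).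
- by move=> j; case: (hJ (inhabits j)).
Qed.
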